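(* Let $l\ge 1$ be an integer and let $x(1),\dots,x(l)\in[0,1)$. Define real numbers $z(1),\dots,z(l)$ by $z(1)=x(1)$ and, for $k=1,\dots,l-1$, with $d_k=(x(k+1)-2z(k))_{\mathrm{mod}\,1}\in[0,1)$, $$z(k+1)=\begin{cases}2z(k)+d_k & \text{if } d_k\in[0,1/3),\\ 2z(k)+1/3 & \text{if } d_k\in[1/3,2/3),\\ 2z(k) & \text{if } d_k\in[2/3,1).\end{cases}$$ Let $\theta\in[0,1)$ and suppose that for every $k=1,\dots,l$ the point $(2^{k-1}\theta)_{\mathrm{mod}\,1}$ lies in the open arc $(x(k),x(k)+1/3)$ on the circle, i.e. $\big((2^{k-1}\theta)_{\mathrm{mod}\,1}-x(k)\big)_{\mathrm{mod}\,1}\in(0,1/3)$. Then $\theta$ lies in the arc on the circle $\big[z(l)/2^{l-1},\,(z(l)+1/3)/2^{l-1}\big]$ (of length $1/(3\cdot 2^{l-1})$), i.e. there is an integer $m$ with $\theta+m\in\big[z(l)/2^{l-1},(z(l)+1/3)/2^{l-1}\big]$. Consequently the estimate $\hat\theta=\big((z(l)+1/6)/2^{l-1}\big)_{\mathrm{mod}\,1}$ satisfies $|\hat\theta-\theta|_1\le 1/(3\cdot 2^{l})$.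
   Context: Points of $[0,1)$ are regarded as points on a circle of unit circumference; $(a)_{\mathrm{mod}\,1}$ denotes the representative of $a$ in $[0,1)$. An arc $[a,b]$ (or $(a,b)$) with real $a\le b$, $b-a<1$, is the set $\{t_{\mathrm{mod}\,1}: t\in[a,b]\}$ (resp. $t\in(a,b)$). For $\theta,\hat\theta\in[0,1)$, $|\hat\theta-\theta|_1=\min\big((\hat\theta-\theta)_{\mathrm{mod}\,1},(\theta-\hat\theta)_{\mathrm{mod}\,1}\big)$. *)

(* Defs.v *)
From Stdlib Require Import Reals Lra Lia.
Open Scope R_scope.

(* (a)_{mod 1}: representative of a in [0,1).  Int_part is the floor. *)
Definition mod1 (a : R) : R := a - IZR (Int_part a).

Definition dist1 (a b : R) : R := Rmin (mod1 (a - b)) (mod1 (b - a)).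

Definition zstep (zk xk1 : R) : R :=
  let d := mod1 (xk1 - 2 * zk) in
  if Rlt_dec d (1/3) then 2 * zk + d
  else if Rlt_dec d (2/3) then 2 * zk + 1/3
  else 2 * zk.

(* zrec x j = z(j+1), with x indexed from 1 *)
Fixpoint zrec (x : nat -> R) (j : nat) : R :=
  match j with
  | O => x 1%nat
  | S j' => zstep (zrec x j') (x (j' + 2)%nat)
  end.

Definition z (x : nat -> R) (k : nat) : R := zrec x (k - 1).

(* Main.v *)
Require Import Defs.
From Stdlib Require Import Reals Lra Lia ZArith.
Open Scope R_scope.

Lemma mod1_bounds a : 0 <= mod1 a < 1.
Proof. unfold mod1. destruct (base_Int_part a). lra. Qed.

Lemma mod1_dec a : a = mod1 a + IZR (Int_part a).
Proof. unfold mod1. ring. Qed.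

Lemma mod1_id e k : 0 <= e < 1 -> mod1 (e + IZR k) = e.
Proof.
  intros He. unfold mod1.
  destruct (base_Int_part (e + IZR k)) as [H1 H2].
  set (n := Int_part (e + IZR k)) in *.
  assert (n < k + 1)%Z. { apply lt_IZR. rewrite plus_IZR. simpl. lra. }
  assert (k - 1 < n)%Z. { apply lt_IZR. rewrite minus_IZR. simpl. lra. }
  assert (n = k) by lia. subst n. rewrite H3. ring.
Qed.

Lemma int_small (K : Z) : -4/3 < IZR K < 2/3 -> IZR K = 0 \/ IZR K = -1.
Proof.
  intros [H1 H2].
  assert (-2 < K)%Z by (apply lt_IZR; simpl; lra).
  assert (K < 1)%Z by (apply lt_IZR; simpl; lra).
  assert (K = 0 \/ K = -1)%Z as [-> | ->] by lia; simpl; auto.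
Qed.

Lemma pow2_IZR n : 2 ^ n = IZR (Z.pow 2 (Z.of_nat n)).
Proof. rewrite pow_IZR. reflexivity. Qed.

Lemma arc_int (b xk : R) :
  exists i : Z, b - xk - mod1 (mod1 b - xk) = IZR i.
Proof.
  exists (Int_part b + Int_part (mod1 b - xk))%Z.
  rewrite plus_IZR.
  pose proof (mod1_dec b). pose proof (mod1_dec (mod1 b - xk)). lra.
Qed.

Lemma invariant (l : nat) (x : nat -> R) (theta : R)
  (harc : forall k : nat, (1 <= k <= l)%nat ->
     0 < mod1 (mod1 (2 ^ (k - 1) * theta) - x k) < 1/3) (hl : (1 <= l)%nat) :
  exists m : Z, forall j, (j < l)%nat ->
    exists t, 0 <= t <= 1/3 /\ 2 ^ j * (theta + IZR m) = zrec x j + t.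
Proof.
  pose proof (harc 1%nat ltac:(lia)) as H1. simpl in H1.
  rewrite Rmult_1_l in H1.
  destruct (arc_int theta (x 1%nat)) as [i Hi].
  exists (- i)%Z. intro j. induction j as [|j IH]; intros Hj.
  - exists (mod1 (mod1 theta - x 1%nat)). split; [lra|].
    simpl. rewrite opp_IZR. lra.
  - destruct (IH ltac:(lia)) as [t [Ht Heq]].
    pose proof (harc (S (S j)) ltac:(lia)) as Ha.
    replace (S (S j) - 1)%nat with (S j) in Ha by lia.
    set (s := mod1 (mod1 (2 ^ S j * theta) - x (S (S j)))) in *.
    destruct (arc_int (2 ^ S j * theta) (x (S (S j)))) as [i1 Hi1].
    fold s in Hi1.
    simpl zrec. replace (j + 2)%nat with (S (S j)) by lia.
    set (zr := zrec x j) in *.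
    unfold zstep.
    set (d := mod1 (x (S (S j)) - 2 * zr)).
    pose proof (mod1_bounds (x (S (S j)) - 2 * zr)) as Hd. fold d in Hd.
    pose proof (mod1_dec (x (S (S j)) - 2 * zr)) as Hd2. fold d in Hd2.
    set (i2 := Int_part (x (S (S j)) - 2 * zr)) in *.
    set (K := (i1 + Z.pow 2 (Z.of_nat (S j)) * (- i) + i2)%Z).
    assert (HK : 2 * t - d - s = IZR K).
    { unfold K. rewrite !plus_IZR, mult_IZR, <- pow2_IZR.
      change (2 ^ S j) with (2 * 2 ^ j) in *.
      rewrite opp_IZR in *. nra. }
    assert (HE : 2 * t - d - s = 0 \/ 2 * t - d - s = -1).
    { rewrite HK. apply int_small. lra. }
    change (2 ^ S j) with (2 * 2 ^ j).
    assert (HM : 2 * 2 ^ j * (theta + IZR (- i)) = 2 * zr + 2 * t) by lra.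
    destruct (Rlt_dec d (1/3)).
    + exists (2 * t - d). split; [destruct HE; lra | lra].
    + destruct (Rlt_dec d (2/3)).
      * exists (2 * t - 1/3). split; [destruct HE; lra | lra].
      * exists (2 * t). split; [destruct HE; lra | lra].
Qed.

Theorem mainTheorem1 (l : nat) (hl : (1 <= l)%nat) (x : nat -> R)
  (hx : forall k : nat, (1 <= k <= l)%nat -> 0 <= x k < 1)
  (theta : R) (htheta : 0 <= theta < 1)
  (harc : forall k : nat, (1 <= k <= l)%nat ->
     0 < mod1 (mod1 (2 ^ (k - 1) * theta) - x k) < 1/3) :
  (exists m : Z,
     z x l / 2 ^ (l - 1) <= theta + IZR m <= (z x l + 1/3) / 2 ^ (l - 1))
  /\ dist1 (mod1 ((z x l + 1/6) / 2 ^ (l - 1))) theta <= 1 / (3 * 2 ^ l).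
Proof.
  destruct (invariant l x theta harc hl) as [m Hm].
  destruct (Hm (l - 1)%nat ltac:(lia)) as [t [Ht Heq]].
  unfold z. set (zz := zrec x (l - 1)) in *.
  set (P := 2 ^ (l - 1)) in *.
  assert (HP : 1 <= P). { unfold P. clear. induction (l-1)%nat; simpl; lra. }
  assert (H2l : 2 ^ l = 2 * P).
  { unfold P. replace l with (S (l - 1)) at 1 by lia. reflexivity. }
  set (Q := / P).
  assert (HQ : 0 < Q <= 1).
  { unfold Q. split. apply Rinv_0_lt_compat; lra.
    rewrite <- Rinv_1. apply Rinv_le_contravar; lra. }
  assert (HT : theta + IZR m = (zz + t) * Q).
  { unfold Q. rewrite <- Heq. field. lra. }
  split.
  - exists m. unfold Rdiv. fold Q. rewrite HT. split; nra.
  - rewrite H2l.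
    replace (1 / (3 * (2 * P))) with (Q / 6) by (unfold Q; field; lra).
    unfold Rdiv at 1. fold Q.
    set (c := (zz + 1/6) * Q).
    set (e := c - theta - IZR m).
    assert (He : - (Q/6) <= e <= Q/6) by (unfold e, c; nra).
    unfold dist1.
    destruct (Rle_lt_dec 0 e).
    + assert (mod1 (mod1 c - theta) = e) as ->.
      { replace (mod1 c - theta) with (e + IZR (m - Int_part c)).
        apply mod1_id; lra.
        rewrite minus_IZR. unfold mod1, e. ring. }
      apply Rle_trans with e. apply Rmin_l. lra.
    + assert (mod1 (theta - mod1 c) = - e) as ->.
      { replace (theta - mod1 c) with (- e + IZR (Int_part c - m)).
        apply mod1_id; lra.
        rewrite minus_IZR. unfold mod1, e. ring. }
      apply Rle_trans with (- e). apply Rmin_r. lra.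
Qed.
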